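(* Consider the model described in the context with private signals that are conditionally independent given $H$ but not necessarily identically distributed, and with a unanimity fusion rule, i.e. $L=1$ (\textsc{or}) or $L=N$ (\textsc{and}). Then secret voting is optimal: the minimum team Bayes risk under public voting, for any order in which the agents act, equals the minimum team Bayes risk under secret voting, which (for $L=1$) is $\min_{\lambda_1,\dots,\lambda_N}\big[c_{10}p_0\big(1-\prod_{n=1}^N(1-P^{\rm I}_{e,n})\big)+c_{01}p_1\prod_{n=1}^N P^{\rm II}_{e,n}\big]$ and (for $L=N$) is $\min_{\lambda_1,\dots,\lambda_N}\big[c_{10}p_0\prod_{n=1}^N P^{\rm I}_{e,n}+c_{01}p_1\big(1-\prod_{n=1}^N(1-P^{\rm II}_{e,n})\big)\big]$. Moreover, there is an optimal public-voting strategy in which each agent uses her optimal secret-voting threshold regardless of the public signals and of her position in the order; thus neither the public signals nor the ordering of agents affects the optimal decision rules or the resulting performance.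
   Context: Binary hypothesis $H\in\{0,1\}$ with prior $p_0=\mathbb P\{H=0\}\in(0,1)$, $p_1=1-p_0$. Agents $n=1,\dots,N$ each observe a private signal $Y_n$ with likelihood $f_{Y_n|H}(y\mid h)$; the $Y_n$ are conditionally independent given $H$, and each likelihood ratio $f_{Y_n|H}(y\mid 1)/f_{Y_n|H}(y\mid 0)$ is strictly increasing in $y$. Each agent makes a local decision $\widehat H_n\in\{0,1\}$ by a threshold test: $\widehat H_n=1$ iff $Y_n\ge$ (her threshold). Local error probabilities: $P^{\rm I}_{e,n}=\mathbb P\{\widehat H_n=1\mid H=0\}$, $P^{\rm II}_{e,n}=\mathbb P\{\widehat H_n=0\mid H=1\}$, determined by Agent $n$'s threshold $\lambda_n$. The team decision uses the $L$-out-of-$N$ fusion rule: $\widehat H=1$ iff $\sum_{n=1}^N\widehat H_n\ge L$. The team Bayes risk is $R=c_{10}p_0\,\mathbb P\{\widehat H=1\mid H=0\}+c_{01}p_1\,\mathbb P\{\widehat H=0\mid H=1\}$ with costs $c_{10},c_{01}>0$; ''optimal'' means minimizing $R$ over all allowed thresholds. Secret voting: each Agent $n$ uses a single threshold $\lambda_n$ (her decision depends only on $Y_n$). Public voting: agents decide in some fixed order, each agent observes all earlier agents' decisions (the ''public signals'') and uses a threshold that may depend on the observed decisions. *)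

(* Defs.v *)
From Stdlib Require Import Reals List Permutation.
Import ListNotations.
Open Scope R_scope.

(* Signal model, abstracted to what the threshold tests see.
   F n h lam = P{ Y_n < lam | H = h }  (conditional CDF, left-limit version),
   so Agent n with threshold lam (decide 1 iff Y_n >= lam) has
   P^I_{e,n}  = P{Y_n >= lam | H=0} = 1 - F n false lam,
   P^II_{e,n} = P{Y_n <  lam | H=1} = F n true lam.
   Hypothesis h is encoded as a bool: false = H=0, true = H=1. *)

Definition PeI (F : nat -> bool -> R -> R) (n : nat) (lam : R) : R :=
  1 - F n false lam.
Definition PeII (F : nat -> bool -> R -> R) (n : nat) (lam : R) : R :=
  F n true lam.

Definition p_one (F : nat -> bool -> R -> R) (h : bool) (n : nat) (lam : R) : R :=
  if h then 1 - PeII F n lam else PeI F n lam.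

Fixpoint count_ones (l : list bool) : nat :=
  match l with
  | [] => 0%nat
  | b :: t => ((if b then 1 else 0) + count_ones t)%nat
  end.

(* A (public-voting) strategy: s n hist = threshold used by agent n when the
   public decisions of the earlier agents (in acting order) are hist.
   Secret voting = strategies ignoring hist.
   prob_team1 F L h ord s hist = P{ team decides 1 | H = h, earlier public
   decisions = hist }, when the agents in ord still have to act, in that order.
   By conditional independence of the Y_n given H, agent n's decision is
   independent of earlier decisions given H, so this recursion is the exact
   law of the L-out-of-N fusion outcome. *)
Fixpoint prob_team1 (F : nat -> bool -> R -> R) (L : nat) (h : bool)
    (ord : list nat) (s : nat -> list bool -> R) (hist : list bool) : R :=
  match ord with
  | [] => if Nat.leb L (count_ones hist) then 1 else 0
  | a :: rest =>
      let q := p_one F h a (s a hist) in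
      q * prob_team1 F L h rest s (hist ++ [true])
      + (1 - q) * prob_team1 F L h rest s (hist ++ [false])
  end.

Definition team_risk (F : nat -> bool -> R -> R) (L : nat) (p0 c10 c01 : R)
    (ord : list nat) (s : nat -> list bool -> R) : R :=
  c10 * p0 * prob_team1 F L false ord s []
  + c01 * (1 - p0) * (1 - prob_team1 F L true ord s []).

Definition secret_risk (F : nat -> bool -> R -> R) (N L : nat) (p0 c10 c01 : R)
    (lam : nat -> R) : R :=
  team_risk F L p0 c10 c01 (seq 0 N) (fun n _ => lam n).

Definition prodR (l : list R) : R := fold_right Rmult 1 l.

Definition valid_cdfs (F : nat -> bool -> R -> R) : Prop :=
  forall n h, (forall x, 0 <= F n h x <= 1) /\
              (forall x y, x <= y -> F n h x <= F n h y).

(* Main.v *)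
Require Import Defs.
From Stdlib Require Import Reals List Permutation Lia Lra.
Import ListNotations.
Open Scope R_scope.

Definition w (b : bool) (q : R) : R := if b then q else 1 - q.

Fixpoint G (F : nat -> bool -> R -> R) (b h : bool) (ord : list nat)
  (s : nat -> list bool -> R) (hist : list bool) : R :=
  match ord with
  | [] => 1
  | a :: rest => w b (p_one F h a (s a hist)) * G F b h rest s (hist ++ [b])
  end.

Lemma count_app (l : list bool) (b : bool) :
  count_ones (l ++ [b]) = (count_ones l + if b then 1 else 0)%nat.
Proof. induction l as [|x l IH]; simpl; [destruct b; reflexivity|rewrite IH; lia]. Qed.

Lemma prob_one F L h ord s hist :
  (L <= count_ones hist)%nat -> prob_team1 F L h ord s hist = 1.
Proof.
  revert hist; induction ord as [|a rest IH]; intros hist H; simpl.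
  - apply Nat.leb_le in H; rewrite H; reflexivity.
  - rewrite !IH; [ring| |]; rewrite count_app; lia.
Qed.

Lemma prob_zero F L h ord s hist :
  (count_ones hist + length ord < L)%nat -> prob_team1 F L h ord s hist = 0.
Proof.
  revert hist; induction ord as [|a rest IH]; intros hist H; simpl in *.
  - destruct (Nat.leb L (count_ones hist)) eqn:E; [apply Nat.leb_le in E; lia|reflexivity].
  - rewrite !IH; [ring| |]; rewrite count_app; lia.
Qed.

Lemma prob_or F h ord s hist :
  count_ones hist = 0%nat -> prob_team1 F 1 h ord s hist = 1 - G F false h ord s hist.
Proof.
  revert hist; induction ord as [|a rest IH]; intros hist H; simpl.
  - rewrite H; simpl; ring.
  - rewrite prob_one by (rewrite count_app; lia).
    rewrite IH by (rewrite count_app; lia). unfold w; ring.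
Qed.

Lemma prob_and F L h ord s hist :
  (count_ones hist + length ord)%nat = L -> prob_team1 F L h ord s hist = G F true h ord s hist.
Proof.
  revert hist; induction ord as [|a rest IH]; intros hist H; simpl in *.
  - replace (Nat.leb L (count_ones hist)) with true; [reflexivity|].
    symmetry; apply Nat.leb_le; lia.
  - rewrite (prob_zero F L h rest s (hist ++ [false])) by (rewrite count_app; lia).
    rewrite IH by (rewrite count_app; lia). unfold w; ring.
Qed.

Lemma prob_rep F N L h ord s :
  (L = 1%nat \/ L = N) -> length ord = N ->
  prob_team1 F L h ord s [] =
  if Nat.eqb L 1 then 1 - G F false h ord s [] else G F true h ord s [].
Proof.
  intros HL Hlen. destruct (Nat.eqb L 1) eqn:E.
  - apply Nat.eqb_eq in E; subst; apply prob_or; reflexivity.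
  - apply Nat.eqb_neq in E. apply prob_and. simpl. destruct HL; [contradiction|]. subst. reflexivity.
Qed.

Lemma G_secret F b h ord lam hist :
  G F b h ord (fun n _ => lam n) hist = prodR (map (fun a => w b (p_one F h a (lam a))) ord).
Proof.
  revert hist; induction ord as [|a rest IH]; intros hist; simpl; [reflexivity|].
  rewrite IH; reflexivity.
Qed.

Lemma G_exists F b ord s hist :
  NoDup ord -> exists lam : nat -> R, forall h,
    G F b h ord s hist = prodR (map (fun a => w b (p_one F h a (lam a))) ord).
Proof.
  revert hist; induction ord as [|a rest IH]; intros hist Hnd.
  - exists (fun _ => 0); reflexivity.
  - inversion Hnd as [|x y Hnin Hnd']; subst.
    destruct (IH (hist ++ [b]) Hnd') as [lam' Hl].
    exists (fun n => if Nat.eqb n a then s a hist else lam' n).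
    intros h; simpl. rewrite Nat.eqb_refl, Hl. f_equal.
    f_equal. apply map_ext_in. intros x Hx.
    destruct (Nat.eqb x a) eqn:E; [apply Nat.eqb_eq in E; subst; contradiction|reflexivity].
Qed.

Lemma prodR_perm l l' : Permutation l l' -> prodR l = prodR l'.
Proof. induction 1; simpl; try ring; congruence. Qed.

Lemma prodR_map_perm (f : nat -> R) l l' : Permutation l l' -> prodR (map f l) = prodR (map f l').
Proof. intro H; apply prodR_perm, Permutation_map, H. Qed.

Lemma public_to_secret F N L p0 c10 c01 ord s :
  (L = 1%nat \/ L = N) -> Permutation (seq 0 N) ord ->
  exists lam, team_risk F L p0 c10 c01 ord s = secret_risk F N L p0 c10 c01 lam.
Proof.
  intros HL Hp.
  assert (Hlen : length ord = N) by (rewrite <- (Permutation_length Hp); apply length_seq).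
  assert (Hnd : NoDup ord) by (eapply Permutation_NoDup; [exact Hp| apply seq_NoDup]).
  destruct (G_exists F (negb (Nat.eqb L 1)) ord s [] Hnd) as [lam Hl].
  exists lam. unfold secret_risk, team_risk.
  rewrite !(prob_rep F N L _ ord), !(prob_rep F N L _ (seq 0 N)) by (auto; apply length_seq).
  destruct (Nat.eqb L 1); simpl in Hl; rewrite !Hl, !G_secret,
    !(prodR_map_perm _ ord (seq 0 N)) by (apply Permutation_sym; exact Hp); reflexivity.
Qed.

Lemma secret_perm F N L p0 c10 c01 ord lam :
  (L = 1%nat \/ L = N) -> Permutation (seq 0 N) ord ->
  team_risk F L p0 c10 c01 ord (fun n _ => lam n) = secret_risk F N L p0 c10 c01 lam.
Proof.
  intros HL Hp.
  assert (Hlen : length ord = N) by (rewrite <- (Permutation_length Hp); apply length_seq).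
  unfold secret_risk, team_risk.
  rewrite !(prob_rep F N L _ ord), !(prob_rep F N L _ (seq 0 N)) by (auto; apply length_seq).
  rewrite !G_secret, !(prodR_map_perm _ ord (seq 0 N)) by (apply Permutation_sym; exact Hp).
  reflexivity.
Qed.

Theorem theorem3 (F : nat -> bool -> R -> R) (N L : nat) (p0 c10 c01 : R) :
  valid_cdfs F ->
  0 < p0 < 1 -> 0 < c10 -> 0 < c01 ->
  (1 <= N)%nat ->
  (L = 1%nat \/ L = N) ->
  (forall ord : list nat, Permutation (seq 0 N) ord ->
     forall r : R,
       (exists s : nat -> list bool -> R, team_risk F L p0 c10 c01 ord s = r) <->
       (exists lam : nat -> R, secret_risk F N L p0 c10 c01 lam = r))
  /\ (forall lam : nat -> R,
        secret_risk F N L p0 c10 c01 lam =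
        if Nat.eqb L 1 then
          c10 * p0 * (1 - prodR (map (fun n => 1 - PeI F n (lam n)) (seq 0 N)))
          + c01 * (1 - p0) * prodR (map (fun n => PeII F n (lam n)) (seq 0 N))
        else
          c10 * p0 * prodR (map (fun n => PeI F n (lam n)) (seq 0 N))
          + c01 * (1 - p0) * (1 - prodR (map (fun n => 1 - PeII F n (lam n)) (seq 0 N))))
  /\ (forall lamstar : nat -> R,
        (forall lam : nat -> R,
           secret_risk F N L p0 c10 c01 lamstar <= secret_risk F N L p0 c10 c01 lam) ->
        forall ord : list nat, Permutation (seq 0 N) ord ->
          team_risk F L p0 c10 c01 ord (fun n _ => lamstar n)
            = secret_risk F N L p0 c10 c01 lamstar
          /\ forall s : nat -> list bool -> R,
               team_risk F L p0 c10 c01 ord (fun n _ => lamstar n)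
               <= team_risk F L p0 c10 c01 ord s).
Proof.
  intros _ _ _ _ _ HL. split; [|split].
  - intros ord Hp r; split.
    + intros [s Hs]. destruct (public_to_secret F N L p0 c10 c01 ord s HL Hp) as [lam Hl].
      exists lam; congruence.
    + intros [lam Hl]. exists (fun n _ => lam n). rewrite (secret_perm F N); auto.
  - intros lam. unfold secret_risk, team_risk.
    rewrite !(prob_rep F N L) by (auto; apply length_seq). rewrite !G_secret.
    destruct (Nat.eqb L 1); simpl.
    + assert (E : map (fun a => 1 - (1 - PeII F a (lam a))) (seq 0 N)
                 = map (fun n => PeII F n (lam n)) (seq 0 N))
        by (apply map_ext; intro; simpl; ring).
      rewrite E. ring.
    + reflexivity.
  - intros lamstar Hopt ord Hp. split; [apply (secret_perm F N); auto|].
    intros s. destruct (public_to_secret F N L p0 c10 c01 ord s HL Hp) as [lam Hl].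
    rewrite Hl, (secret_perm F N) by auto. apply Hopt.
Qed.
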